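(* In the setting of the context, fix $\varepsilon\in(0,1]$ and $x\in\mathbb{X}$, let $P_x(s)=|\psi_x^+(s,\varepsilon)\rangle\langle\psi_x^+(s,\varepsilon)|$, $N_x=\|\,|\Psi_x^+(s,\varepsilon)\rangle\|$ (independent of $s$), and $$X_x(s)=\frac{\pi}{2N_x}\,|\Psi_x^-(s,\varepsilon)\rangle\langle\psi_x^+(s,\varepsilon)|,\qquad s\in[0,1].$$ Then $[H_x(s,\varepsilon),X_x(s)]=H_x(s,\varepsilon)X_x(s)=\dot P_x(s)P_x(s)$ for all $s\in[0,1]$ (dot denotes $\partial_s$). If moreover $W\ge\varepsilon/2$, then for all $s\in[0,1]$ $$\|X_x(s)\|\le\frac{\pi\sqrt5}{2}\,\frac{W}{\varepsilon},\qquad \|\dot X_x(s)P_x(s)\|\le\frac{\pi^2}{\sqrt2}\,\frac{W}{\varepsilon},$$ and in particular $2\|X_x(s)\|+\|\dot X_x(s)P_x(s)\|\le 15\,W/\varepsilon$.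
   Context: Setting (construction of AdiaConvert). Let $\Sigma$ be finite, $\bar 0\notin\Sigma$, $n\ge1$, $\mathbb{X}\subseteq\Sigma^n$, and $\rho,\sigma$ the Gram matrices of unit vectors $|\rho_x\rangle,|\sigma_x\rangle\in\mathbb{C}^d$ ($x\in\mathbb X$). For $j\in[n]$, $(\Delta_j)_{x,y}=1-\delta_{x_j,y_j}$. Let $W=\mathrm{Adv}^\star(\rho,\sigma)$, where $\mathrm{Adv}^\star(\rho,\sigma)=\max_\Gamma\|\Gamma\circ(\rho-\sigma)\|$ over Hermitian $\Gamma$ with $\|\Gamma\circ\Delta_j\|\le1$ for all $j$ ($\circ$ = entrywise product); assume $W>0$. Fix $m$ and vectors $u_{x,i},v_{x,i}\in\mathbb{C}^m$ ($x\in\mathbb X$, $i\in[n]$) such that $\rho_{x,y}-\sigma_{x,y}=\sum_i(\Delta_i)_{x,y}\langle u_{x,i}|v_{y,i}\rangle$ for all $x,y$, and $\sum_i\|u_{x,i}\|^2\le W$, $\sum_i\|v_{x,i}\|^2\le W$ for all $x$. Hilbert space: $\mathcal H=\mathcal H_{\mathcal O}\oplus(\mathcal H_{\mathcal Q}\otimes\mathcal H_{\mathcal W})$ (orthogonal direct sum) with $\mathcal H_{\mathcal O}=\mathbb{C}^2\otimes\mathbb{C}^d$, $\mathcal H_{\mathcal Q}=\mathbb{C}^n\otimes\mathbb{C}^{\Sigma\cup\{\bar0\}}$ (orthonormal basis $|i,y\rangle$), $\mathcal H_{\mathcal W}=\mathbb{C}^m$. For $y\in\Sigma$, $|y^\pm\rangle=\frac1{\sqrt2}(|\bar0\rangle\pm|y\rangle)$.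 Let $\theta(s)=\frac{\pi}{2}s$, $\xi(s)=2\cos\theta(s)\sin\theta(s)$, $|k_x^+(s)\rangle=\cos\theta(s)|0,\rho_x\rangle+\sin\theta(s)|1,\sigma_x\rangle$, $|k_x^-(s)\rangle=-\sin\theta(s)|0,\rho_x\rangle+\cos\theta(s)|1,\sigma_x\rangle$ (in $\mathcal H_{\mathcal O}$), $|\Psi_x^+(s,\varepsilon)\rangle=|k_x^+(s)\rangle+\frac{\varepsilon}{\sqrt W}\sum_i|i,x_i^+\rangle|u_{x,i}\rangle$, $|\Psi_x^-(s,\varepsilon)\rangle=|k_x^-(s)\rangle+\xi(s)\frac{\sqrt W}{\varepsilon}\sum_i|i,x_i^-\rangle|v_{x,i}\rangle$, $|\psi_x^+(s,\varepsilon)\rangle=|\Psi_x^+(s,\varepsilon)\rangle/\|\,|\Psi_x^+(s,\varepsilon)\rangle\|$. $\Lambda(s,\varepsilon)$ is the orthogonal projection onto $\mathrm{span}\{|\Psi_x^-(s,\varepsilon)\rangle: x\in\mathbb X\}$; $\Pi_x=\sum_i|i,x_i^-\rangle\langle i,x_i^-|\otimes I_{\mathcal W}$, acting as $0$ on $\mathcal H_{\mathcal O}$; $H_x(s,\varepsilon)=\Lambda(s,\varepsilon)-\Pi_x$. $\|\cdot\|$ on operators is the operator norm. *)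

(* Defs.v *)
From Stdlib Require Import Reals Lra Lia Arith.
Open Scope R_scope.

Record C : Type := Cmk { cre : R ; cim : R }.
Definition C0 : C := Cmk 0 0.
Definition C1 : C := Cmk 1 0.
Definition RtoC (r : R) : C := Cmk r 0.
Definition Cadd (z w : C) : C := Cmk (cre z + cre w) (cim z + cim w).
Definition Copp (z : C) : C := Cmk (- cre z) (- cim z).
Definition Csub (z w : C) : C := Cadd z (Copp w).
Definition Cmul (z w : C) : C :=
  Cmk (cre z * cre w - cim z * cim w) (cre z * cim w + cim z * cre w).
Definition Cconj (z : C) : C := Cmk (cre z) (- cim z).
Definition Cabs2 (z : C) : R := cre z * cre z + cim z * cim z.

Fixpoint rsum (n : nat) (f : nat -> R) : R :=
  match n with O => 0 | S p => rsum p f + f p end.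
Fixpoint csum (n : nat) (f : nat -> C) : C :=
  match n with O => C0 | S p => Cadd (csum p f) (f p) end.

(* A vector of C^D is a function nat -> C, only coordinates < D matter. *)
Definition vec := nat -> C.
Definition mat := nat -> nat -> C.

Definition vzero : vec := fun _ => C0.
Definition vadd (u v : vec) : vec := fun t => Cadd (u t) (v t).
Definition vsub (u v : vec) : vec := fun t => Csub (u t) (v t).
Definition vscale (c : C) (v : vec) : vec := fun t => Cmul c (v t).
Fixpoint vsum (n : nat) (f : nat -> vec) : vec :=
  match n with O => vzero | S p => vadd (vsum p f) (f p) end.
Definition basis (j : nat) : vec := fun t => if Nat.eqb t j then C1 else C0.

Definition inner (D : nat) (u v : vec) : C := csum D (fun t => Cmul (Cconj (u t)) (v t)).
Definition vnorm (D : nat) (v : vec) : R := sqrt (rsum D (fun t => Cabs2 (v t))).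

Definition mapply (D : nat) (M : mat) (v : vec) : vec :=
  fun i => csum D (fun j => Cmul (M i j) (v j)).
Definition mmul (D : nat) (A B : mat) : mat :=
  fun i j => csum D (fun l => Cmul (A i l) (B l j)).
Definition madd (A B : mat) : mat := fun i j => Cadd (A i j) (B i j).
Definition msub (A B : mat) : mat := fun i j => Csub (A i j) (B i j).
Definition mscale (c : C) (A : mat) : mat := fun i j => Cmul c (A i j).
Fixpoint msum (n : nat) (f : nat -> mat) : mat :=
  match n with O => fun _ _ => C0 | S p => madd (msum p f) (f p) end.
Definition outer (u v : vec) : mat := fun i j => Cmul (u i) (Cconj (v j)).
Definition hadamard (A B : mat) : mat := fun i j => Cmul (A i j) (B i j).
Definition meq (D : nat) (A B : mat) : Prop :=
  forall i j, (i < D)%nat -> (j < D)%nat -> A i j = B i j.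
Definition commutator (D : nat) (A B : mat) : mat := msub (mmul D A B) (mmul D B A).

Definition opnorm_le (D : nat) (A : mat) (c : R) : Prop :=
  forall v : vec, vnorm D (mapply D A v) <= c * vnorm D v.
Definition is_opnorm (D : nat) (A : mat) (r : R) : Prop :=
  0 <= r /\ opnorm_le D A r /\ (forall c, 0 <= c -> opnorm_le D A c -> r <= c).

Definition has_cderiv (f : R -> C) (s : R) (l : C) : Prop :=
  derivable_pt_lim (fun t => cre (f t)) s (cre l) /\
  derivable_pt_lim (fun t => cim (f t)) s (cim l).
Definition has_mderiv (D : nat) (M : R -> mat) (s : R) (M' : mat) : Prop :=
  forall i j, (i < D)%nat -> (j < D)%nat -> has_cderiv (fun t => M t i j) s (M' i j).

(* X is encoded as strs a (a < NX), each a string of length n over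
   Sigma = {0,..,k-1}; the Gram matrices rho, sigma are NX x NX. *)
Definition DeltaM (strs : nat -> nat -> nat) (j : nat) : mat :=
  fun a b => if Nat.eqb (strs a j) (strs b j) then C0 else C1.
Definition gram (d : nat) (vs : nat -> vec) : mat := fun a b => inner d (vs a) (vs b).
Definition hermitian (NX : nat) (G : mat) : Prop :=
  forall a b, (a < NX)%nat -> (b < NX)%nat -> G b a = Cconj (G a b).
Definition adv_feasible (NX n : nat) (strs : nat -> nat -> nat) (G : mat) : Prop :=
  hermitian NX G /\ forall j, (j < n)%nat -> opnorm_le NX (hadamard G (DeltaM strs j)) 1.
Definition is_adv_star (NX n : nat) (strs : nat -> nat -> nat) (rho sigma : mat) (W : R) : Prop :=
  (exists G, adv_feasible NX n strs G /\ is_opnorm NX (hadamard G (msub rho sigma)) W) /\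
  (forall G, adv_feasible NX n strs G -> opnorm_le NX (hadamard G (msub rho sigma)) W).

(* Coordinates: |b,a> in H_O (b<2, a<d) has index b*d + a;
   |i,y> (x) |w> (i<n, y<=k, w<m; y = k encodes 0bar) has index 2d + (i*(k+1)+y)*m + w. *)
Definition dimH (d n k m : nat) : nat := (2 * d + n * (k + 1) * m)%nat.
Definition idxO (d b a : nat) : nat := (b * d + a)%nat.
Definition idxQ (d k m i y w : nat) : nat := (2 * d + (i * (k + 1) + y) * m + w)%nat.

Definition isqrt2 : C := RtoC (/ sqrt 2).
Definition embO (d b : nat) (v : vec) : vec :=
  vsum d (fun a => vscale (v a) (basis (idxO d b a))).
Definition ketQplus (d k m i y : nat) (u : vec) : vec :=
  vsum m (fun w => vscale (Cmul (u w) isqrt2)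
                     (vadd (basis (idxQ d k m i k w)) (basis (idxQ d k m i y w)))).
Definition ketQminus (d k m i y : nat) (u : vec) : vec :=
  vsum m (fun w => vscale (Cmul (u w) isqrt2)
                     (vsub (basis (idxQ d k m i k w)) (basis (idxQ d k m i y w)))).

Definition theta (s : R) : R := PI / 2 * s.
Definition xi (s : R) : R := 2 * cos (theta s) * sin (theta s).

Section Construction.
Variables (d n k m : nat) (W eps : R)
  (strs : nat -> nat -> nat) (rv sv : nat -> vec) (U V : nat -> nat -> vec).

Definition kplus (a : nat) (s : R) : vec :=
  vadd (vscale (RtoC (cos (theta s))) (embO d 0 (rv a)))
       (vscale (RtoC (sin (theta s))) (embO d 1 (sv a))).
Definition kminus (a : nat) (s : R) : vec :=
  vadd (vscale (RtoC (- sin (theta s))) (embO d 0 (rv a)))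
       (vscale (RtoC (cos (theta s))) (embO d 1 (sv a))).
Definition PsiPlus (a : nat) (s : R) : vec :=
  vadd (kplus a s)
       (vscale (RtoC (eps / sqrt W)) (vsum n (fun i => ketQplus d k m i (strs a i) (U a i)))).
Definition PsiMinus (a : nat) (s : R) : vec :=
  vadd (kminus a s)
       (vscale (RtoC (xi s * sqrt W / eps)) (vsum n (fun i => ketQminus d k m i (strs a i) (V a i)))).
Definition Nrm (a : nat) (s : R) : R := vnorm (dimH d n k m) (PsiPlus a s).
Definition psiPlus (a : nat) (s : R) : vec := vscale (RtoC (/ Nrm a s)) (PsiPlus a s).
Definition Pproj (a : nat) (s : R) : mat := outer (psiPlus a s) (psiPlus a s).
Definition Xop (a : nat) (s : R) : mat :=
  mscale (RtoC (PI / (2 * Nrm a s))) (outer (PsiMinus a s) (psiPlus a s)).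
Definition PiX (a : nat) : mat :=
  msum n (fun i => msum m (fun w =>
    let e := ketQminus d k m i (strs a i) (basis w) in outer e e)).
End Construction.

Definition is_span_proj (D NX : nat) (vs : nat -> vec) (L : mat) : Prop :=
  forall v : vec,
    (exists c : nat -> C, forall t, (t < D)%nat ->
        mapply D L v t = csum NX (fun b => Cmul (c b) (vs b t))) /\
    (forall b, (b < NX)%nat -> inner D (vs b) (vsub v (mapply D L v)) = C0).

(* Main.v *)
Require Import Defs.
From Stdlib Require Import Reals Lra Lia Arith FunctionalExtensionality ZArith.
From Coquelicot Require Import Coquelicot.
Import Defs.
Open Scope R_scope.


Lemma Ceq (z w : C) : cre z = cre w -> cim z = cim w -> z = w.
Proof. destruct z, w; simpl; intros; subst; reflexivity. Qed.

Ltac cring := apply Ceq; simpl; ring.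
Ltac cfield := apply Ceq; simpl; field.

Lemma csum_ext n f g : (forall i, (i < n)%nat -> f i = g i) -> csum n f = csum n g.
Proof. induction n; simpl; intros H; auto. rewrite IHn by (intros; apply H; lia). rewrite H by lia. auto. Qed.

Lemma rsum_ext n f g : (forall i, (i < n)%nat -> f i = g i) -> rsum n f = rsum n g.
Proof. induction n; simpl; intros H; auto. rewrite IHn by (intros; apply H; lia). rewrite H by lia. auto. Qed.

Lemma csum_add n f g : csum n (fun i => Cadd (f i) (g i)) = Cadd (csum n f) (csum n g).
Proof. induction n; simpl. cring. rewrite IHn. cring. Qed.

Lemma csum_scal n c f : csum n (fun i => Cmul c (f i)) = Cmul c (csum n f).
Proof. induction n; simpl. cring. rewrite IHn. cring. Qed.

Lemma csum_scal_r n c f : csum n (fun i => Cmul (f i) c) = Cmul (csum n f) c.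
Proof. induction n; simpl. cring. rewrite IHn. cring. Qed.

Lemma csum_zero n f : (forall i, (i < n)%nat -> f i = C0) -> csum n f = C0.
Proof. induction n; simpl; intros H; auto. rewrite IHn by (intros; apply H; lia). rewrite H by lia. cring. Qed.

Lemma csum_swap n m f : csum n (fun i => csum m (fun j => f i j)) = csum m (fun j => csum n (fun i => f i j)).
Proof. induction n; simpl. symmetry; apply csum_zero; auto. rewrite IHn. rewrite <- csum_add. auto. Qed.

Lemma csum_plus a b f : csum (a + b) f = Cadd (csum a f) (csum b (fun j => f (a + j)%nat)).
Proof. induction b; simpl. rewrite Nat.add_0_r. cring. rewrite Nat.add_succ_r. simpl. rewrite IHb. cring. Qed.

Lemma csum_mul a b f : csum (a * b) f = csum a (fun i => csum b (fun j => f (i * b + j)%nat)).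
Proof. induction a; simpl. auto. rewrite Nat.add_comm, csum_plus, IHa. f_equal. Qed.

Lemma cre_csum n f : cre (csum n f) = rsum n (fun i => cre (f i)).
Proof. induction n; simpl; auto. rewrite IHn; auto. Qed.
Lemma cim_csum n f : cim (csum n f) = rsum n (fun i => cim (f i)).
Proof. induction n; simpl; auto. rewrite IHn; auto. Qed.
Lemma conj_csum n f : Cconj (csum n f) = csum n (fun i => Cconj (f i)).
Proof. induction n; simpl. cring. rewrite <- IHn. cring. Qed.

Lemma rsum_nonneg n f : (forall i, (i < n)%nat -> 0 <= f i) -> 0 <= rsum n f.
Proof. induction n; simpl; intros H. lra. assert (0 <= f n) by (apply H; lia). assert (0 <= rsum n f) by (apply IHn; intros; apply H; lia). lra. Qed.

Lemma rsum_le n f g : (forall i, (i < n)%nat -> f i <= g i) -> rsum n f <= rsum n g.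
Proof. induction n; simpl; intros H. lra. assert (f n <= g n) by (apply H; lia). assert (rsum n f <= rsum n g) by (apply IHn; intros; apply H; lia). lra. Qed.

Lemma rsum_scal n c f : rsum n (fun i => c * f i) = c * rsum n f.
Proof. induction n; simpl. ring. rewrite IHn. ring. Qed.

Lemma rsum_zero_each n f : (forall i, (i < n)%nat -> 0 <= f i) -> rsum n f = 0 -> forall i, (i < n)%nat -> f i = 0.
Proof. induction n; simpl; intros H Hs i Hi. lia.
 assert (0 <= f n) by (apply H; lia). assert (0 <= rsum n f) by (apply rsum_nonneg; intros; apply H; lia).
 destruct (Nat.eq_dec i n). subst; lra. apply IHn; [intros; apply H; lia| lra | lia]. Qed.

Lemma csum_collapse n c t g :
  csum n (fun j => Cmul (g j) (if Nat.eqb t (c + j) then C1 else C0)) =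
  if andb (Nat.leb c t) (Nat.ltb t (c + n)) then g (t - c)%nat else C0.
Proof.
  induction n; simpl.
  - destruct (Nat.leb c t) eqn:E1; destruct (Nat.ltb t (c+0)) eqn:E2; simpl; auto.
    apply Nat.leb_le in E1; apply Nat.ltb_lt in E2; lia.
  - rewrite IHn. destruct (Nat.eqb t (c + n)) eqn:E.
    + apply Nat.eqb_eq in E. subst.
      replace (Nat.leb c (c+n)) with true by (symmetry; apply Nat.leb_le; lia).
      replace (Nat.ltb (c+n) (c+n)) with false by (symmetry; apply Nat.ltb_ge; lia).
      replace (Nat.ltb (c+n) (c+S n)) with true by (symmetry; apply Nat.ltb_lt; lia).
      simpl. replace (c + n - c)%nat with n by lia. cring.
    + apply Nat.eqb_neq in E.
      destruct (Nat.leb c t) eqn:E1; simpl; [|cring].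
      destruct (Nat.ltb t (c+n)) eqn:E2; destruct (Nat.ltb t (c + S n)) eqn:E3; try cring.
      apply Nat.ltb_lt in E2; apply Nat.ltb_ge in E3; lia.
      apply Nat.ltb_ge in E2; apply Nat.ltb_lt in E3; apply Nat.leb_le in E1; lia.
Qed.

Lemma csum_if n i0 F : (i0 < n)%nat -> csum n (fun i => if Nat.eqb i i0 then F i else C0) = F i0.
Proof.
  intros H. transitivity (csum n (fun i => Cmul (F i) (if Nat.eqb i0 (0 + i) then C1 else C0))).
  apply csum_ext; intros i _. simpl. rewrite Nat.eqb_sym. destruct (Nat.eqb i0 i); cring.
  rewrite csum_collapse. replace (Nat.leb 0 i0) with true by (symmetry; apply Nat.leb_le; lia).
  replace (Nat.ltb i0 (0+n)) with true by (symmetry; apply Nat.ltb_lt; lia). simpl. rewrite Nat.sub_0_r. auto.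
Qed.


Lemma vsum_eval n f t : vsum n f t = csum n (fun i => f i t).
Proof. induction n; simpl; auto. unfold vadd. rewrite IHn. auto. Qed.

Lemma inner_ext D u v u' v' : (forall t, (t < D)%nat -> u t = u' t) -> (forall t, (t < D)%nat -> v t = v' t) ->
  inner D u v = inner D u' v'.
Proof. intros H1 H2. unfold inner. apply csum_ext; intros. rewrite H1, H2; auto. Qed.

Lemma inner_self_re D v : cre (inner D v v) = rsum D (fun t => Cabs2 (v t)).
Proof. unfold inner. rewrite cre_csum. apply rsum_ext; intros. unfold Cabs2; simpl. ring. Qed.
Lemma inner_self_im D v : cim (inner D v v) = 0.
Proof. unfold inner. rewrite cim_csum. transitivity (rsum D (fun _ => 0)). apply rsum_ext; intros; simpl; ring.
 clear. induction D; simpl; auto. rewrite IHD. ring. Qed.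

Lemma Cabs2_nonneg z : 0 <= Cabs2 z.
Proof. unfold Cabs2. nra. Qed.

Lemma inner_self_nonneg D v : 0 <= cre (inner D v v).
Proof. rewrite inner_self_re. apply rsum_nonneg; intros; apply Cabs2_nonneg. Qed.

Lemma vnorm_inner D v : vnorm D v = sqrt (cre (inner D v v)).
Proof. unfold vnorm. rewrite inner_self_re. auto. Qed.

Lemma vnorm_sq D v : vnorm D v ^ 2 = cre (inner D v v).
Proof. rewrite vnorm_inner. simpl. rewrite Rmult_1_r. apply sqrt_sqrt. apply inner_self_nonneg. Qed.

Lemma inner_self_RtoC D v : inner D v v = RtoC (vnorm D v ^ 2).
Proof. apply Ceq. rewrite vnorm_sq. auto. rewrite inner_self_im. auto. Qed.

Lemma inner_conj D u v : inner D v u = Cconj (inner D u v).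
Proof. unfold inner. rewrite conj_csum. apply csum_ext; intros. cring. Qed.

Lemma inner_add_r D u v w : inner D u (vadd v w) = Cadd (inner D u v) (inner D u w).
Proof. unfold inner, vadd. rewrite <- csum_add. apply csum_ext; intros; cring. Qed.
Lemma inner_add_l D u v w : inner D (vadd u v) w = Cadd (inner D u w) (inner D v w).
Proof. unfold inner, vadd. rewrite <- csum_add. apply csum_ext; intros; cring. Qed.
Lemma inner_sub_r D u v w : inner D u (vsub v w) = Csub (inner D u v) (inner D u w).
Proof. unfold inner, vsub.
 transitivity (csum D (fun i => Cadd (Cmul (Cconj (u i)) (v i)) (Cmul (Copp C1) (Cmul (Cconj (u i)) (w i))))).
 apply csum_ext; intros; cring. rewrite csum_add, csum_scal. cring. Qed.
Lemma inner_sub_l D u v w : inner D (vsub u v) w = Csub (inner D u w) (inner D v w).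
Proof. rewrite inner_conj, inner_sub_r, (inner_conj D u w), (inner_conj D v w). cring. Qed.
Lemma inner_scale_r D u c v : inner D u (vscale c v) = Cmul c (inner D u v).
Proof. unfold inner, vscale. rewrite <- csum_scal. apply csum_ext; intros; cring. Qed.
Lemma inner_scale_l D u c v : inner D (vscale c u) v = Cmul (Cconj c) (inner D u v).
Proof. unfold inner, vscale. rewrite <- csum_scal. apply csum_ext; intros; cring. Qed.

Lemma inner_csum_r D u N (c : nat -> C) (f : nat -> vec) :
  inner D u (fun t => csum N (fun b => Cmul (c b) (f b t))) = csum N (fun b => Cmul (c b) (inner D u (f b))).
Proof. unfold inner. transitivity (csum D (fun t => csum N (fun b => Cmul (c b) (Cmul (Cconj (u t)) (f b t))))).
 apply csum_ext; intros. rewrite <- csum_scal. apply csum_ext; intros; cring.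
 rewrite csum_swap. apply csum_ext; intros. rewrite csum_scal. auto. Qed.

Lemma inner_csum_l D w N (c : nat -> C) (f : nat -> vec) :
  inner D (fun t => csum N (fun b => Cmul (c b) (f b t))) w = csum N (fun b => Cmul (Cconj (c b)) (inner D (f b) w)).
Proof. rewrite inner_conj, inner_csum_r, conj_csum. apply csum_ext; intros. rewrite (inner_conj D (f i) w). cring. Qed.

Lemma inner_zero_vec D u : (forall t, (t < D)%nat -> u t = C0) -> forall t, (t < D)%nat -> True.
Proof. auto. Qed.

Lemma self_zero D v : cre (inner D v v) = 0 -> forall t, (t < D)%nat -> v t = C0.
Proof. rewrite inner_self_re. intros H t Ht.
 pose proof (rsum_zero_each D _ (fun i _ => Cabs2_nonneg (v i)) H t Ht) as H2.
 unfold Cabs2 in H2. apply Ceq; simpl; nra. Qed.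

Lemma inner_split d n k m u v :
  inner (dimH d n k m) u v =
  Cadd (Cadd (inner d (fun a => u (idxO d 0 a)) (fun a => v (idxO d 0 a)))
             (inner d (fun a => u (idxO d 1 a)) (fun a => v (idxO d 1 a))))
       (csum n (fun i => csum (k+1) (fun y => inner m (fun w => u (idxQ d k m i y w)) (fun w => v (idxQ d k m i y w))))).
Proof.
  unfold inner, dimH. rewrite csum_plus. replace (2*d)%nat with (d+d)%nat by lia.
  rewrite csum_plus. rewrite csum_mul. rewrite csum_mul.
  f_equal. f_equal. apply csum_ext; intros. unfold idxO. simpl. rewrite Nat.add_0_r. auto.
  apply csum_ext; intros. apply csum_ext; intros. apply csum_ext; intros.
  unfold idxQ. replace (d + d + ((i * (k + 1) + i0) * m + i1))%nat with (2 * d + (i * (k + 1) + i0) * m + i1)%nat by lia. auto.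
Qed.


Lemma mul_add_uniq a q r a' r' : (a*q + r = a'*q + r')%nat -> (r<q)%nat -> (r'<q)%nat -> a=a' /\ r=r'.
Proof. intros. assert (a = a') by nia. subst. lia. Qed.

Definition qi (K s y : nat) (sg : C) : C :=
  Cadd (if Nat.eqb K y then C1 else C0) (Cmul sg (if Nat.eqb s y then C1 else C0)).
Definition mone : C := Cmk (-1) 0.

Lemma embO_eval d b v t : embO d b v t = if andb (Nat.leb (b*d) t) (Nat.ltb t (b*d + d)) then v (t - b*d)%nat else C0.
Proof. unfold embO. rewrite vsum_eval. rewrite <- csum_collapse. apply csum_ext; intros. unfold vscale, basis, idxO. auto. Qed.

Ltac bcase := repeat match goal with
 | |- context [Nat.leb ?a ?b] => let E := fresh in destruct (Nat.leb a b) eqn:E; [apply Nat.leb_le in E | apply Nat.leb_gt in E]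
 | |- context [Nat.ltb ?a ?b] => let E := fresh in destruct (Nat.ltb a b) eqn:E; [apply Nat.ltb_lt in E | apply Nat.ltb_ge in E]
 | |- context [Nat.eqb ?a ?b] => let E := fresh in destruct (Nat.eqb a b) eqn:E; [apply Nat.eqb_eq in E | apply Nat.eqb_neq in E]
 end; simpl.

Lemma embO_00 d v a : (a < d)%nat -> embO d 0 v (idxO d 0 a) = v a.
Proof. intros. rewrite embO_eval. unfold idxO. bcase; try lia. f_equal; lia. Qed.
Lemma embO_11 d v a : (a < d)%nat -> embO d 1 v (idxO d 1 a) = v a.
Proof. intros. rewrite embO_eval. unfold idxO. bcase; try lia. f_equal; lia. Qed.
Lemma embO_01 d v a : (a < d)%nat -> embO d 0 v (idxO d 1 a) = C0.
Proof. intros. rewrite embO_eval. unfold idxO. bcase; auto; lia. Qed.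
Lemma embO_10 d v a : (a < d)%nat -> embO d 1 v (idxO d 0 a) = C0.
Proof. intros. rewrite embO_eval. unfold idxO. bcase; auto; lia. Qed.
Lemma embO_Q d k m b v i y w : (b <= 1)%nat -> embO d b v (idxQ d k m i y w) = C0.
Proof. intros. rewrite embO_eval. unfold idxQ. bcase; auto; nia. Qed.

Lemma ketQ_split d k m i y u t (sg : bool) :
  vsum m (fun w => vscale (Cmul (u w) isqrt2)
     (if sg then vadd (basis (idxQ d k m i k w)) (basis (idxQ d k m i y w))
            else vsub (basis (idxQ d k m i k w)) (basis (idxQ d k m i y w)))) t =
  Cadd (csum m (fun w => Cmul (Cmul (u w) isqrt2) (if Nat.eqb t ((2*d + (i*(k+1)+k)*m) + w) then C1 else C0)))
       (Cmul (if sg then C1 else mone) (csum m (fun w => Cmul (Cmul (u w) isqrt2) (if Nat.eqb t ((2*d + (i*(k+1)+y)*m) + w) then C1 else C0)))).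
Proof.
  rewrite vsum_eval. rewrite <- csum_scal, <- csum_add. apply csum_ext; intros.
  unfold idxQ, vscale, vadd, vsub, basis. destruct sg; unfold mone; cring.
Qed.

Lemma posQ d k m i y i' y' w' : (y < k+1)%nat -> (y' < k+1)%nat -> (w' < m)%nat ->
  andb (Nat.leb (2*d + (i*(k+1)+y)*m) (idxQ d k m i' y' w')) (Nat.ltb (idxQ d k m i' y' w') (2*d + (i*(k+1)+y)*m + m))
  = andb (Nat.eqb i i') (Nat.eqb y y').
Proof.
  intros. unfold idxQ. apply Bool.eq_iff_eq_true.
  rewrite !Bool.andb_true_iff, Nat.leb_le, Nat.ltb_lt, !Nat.eqb_eq. split.
  - intros [H3 H4]. assert (i' * (k + 1) + y' = i*(k+1)+y)%nat by nia.
    assert (i' = i /\ y' = y) by (apply mul_add_uniq with (q := (k+1)%nat); lia). lia.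
  - intros [-> ->]. nia.
Qed.

Lemma posO d k m i y t : (t < 2*d)%nat ->
  andb (Nat.leb (2*d + (i*(k+1)+y)*m) t) (Nat.ltb t (2*d + (i*(k+1)+y)*m + m)) = false.
Proof. intros. bcase; auto; lia. Qed.

Definition sgc (sg : bool) : C := if sg then C1 else mone.

Lemma ketQ_at_Q d k m i y u i' y' w' (sg : bool) : (y < k)%nat -> (y' < k+1)%nat -> (w' < m)%nat ->
  vsum m (fun w => vscale (Cmul (u w) isqrt2)
     (if sg then vadd (basis (idxQ d k m i k w)) (basis (idxQ d k m i y w))
            else vsub (basis (idxQ d k m i k w)) (basis (idxQ d k m i y w)))) (idxQ d k m i' y' w')
  = if Nat.eqb i i' then Cmul (Cmul (u w') isqrt2) (qi k y y' (sgc sg)) else C0.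
Proof.
  intros. rewrite ketQ_split. rewrite !csum_collapse. rewrite !posQ by lia.
  assert (Hw : (idxQ d k m i' y' w' - (2 * d + (i' * (k + 1) + y') * m))%nat = w') by (unfold idxQ; lia).
  unfold qi, sgc. destruct (Nat.eqb i i') eqn:E; simpl.
  - apply Nat.eqb_eq in E; subst.
    destruct (Nat.eqb k y') eqn:E1; destruct (Nat.eqb y y') eqn:E2;
    try apply Nat.eqb_eq in E1; try apply Nat.eqb_eq in E2; subst; try lia;
    try match goal with |- context [(?a - ?b)%nat] => replace (a - b)%nat with w' by (unfold idxQ; lia) end;
    destruct sg; unfold mone; cring.
  - destruct sg; unfold mone; cring.
Qed.

Lemma ketQ_at_O d k m i y u t (sg : bool) : (t < 2*d)%nat ->
  vsum m (fun w => vscale (Cmul (u w) isqrt2)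
     (if sg then vadd (basis (idxQ d k m i k w)) (basis (idxQ d k m i y w))
            else vsub (basis (idxQ d k m i k w)) (basis (idxQ d k m i y w)))) t = C0.
Proof. intros. rewrite ketQ_split, !csum_collapse, !posO by lia. destruct sg; unfold mone; cring. Qed.

Definition Qs d k m n (sg : bool) (st : nat -> nat) (g : nat -> vec) : vec :=
  vsum n (fun i => if sg then ketQplus d k m i (st i) (g i) else ketQminus d k m i (st i) (g i)).

Lemma Qs_at_Q d k m n sg st g i' y' w' : (forall i, (i < n)%nat -> (st i < k)%nat) ->
  (i' < n)%nat -> (y' < k+1)%nat -> (w' < m)%nat ->
  Qs d k m n sg st g (idxQ d k m i' y' w') = Cmul (Cmul (g i' w') isqrt2) (qi k (st i') y' (sgc sg)).
Proof.
  intros. unfold Qs. rewrite vsum_eval.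
  transitivity (csum n (fun i => if Nat.eqb i i' then Cmul (Cmul (g i w') isqrt2) (qi k (st i) y' (sgc sg)) else C0)).
  - apply csum_ext; intros i Hi.
    rewrite (Nat.eqb_sym i i').
    pose proof (ketQ_at_Q d k m i (st i) (g i) i' y' w' sg (H i Hi) H1 H2) as HH.
    rewrite (Nat.eqb_sym i i') in HH.
    destruct sg; exact HH.
  - apply (csum_if n i' (fun i => Cmul (Cmul (g i w') isqrt2) (qi k (st i) y' (sgc sg)))); auto.
Qed.

Lemma Qs_at_O d k m n sg st g t : (t < 2*d)%nat -> Qs d k m n sg st g t = C0.
Proof.
  intros. unfold Qs. rewrite vsum_eval. apply csum_zero; intros i Hi.
  pose proof (ketQ_at_O d k m i (st i) (g i) t sg H) as HH. destruct sg; exact HH.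
Qed.


Definition has_blocks d n k m (u : vec) (p0 : C) (r : vec) (p1 : C) (s : vec) (f : nat -> vec) (sg : C) (st : nat -> nat) :=
  (forall a, (a < d)%nat -> u (idxO d 0 a) = Cmul p0 (r a)) /\
  (forall a, (a < d)%nat -> u (idxO d 1 a) = Cmul p1 (s a)) /\
  (forall i y w, (i < n)%nat -> (y < k+1)%nat -> (w < m)%nat ->
      u (idxQ d k m i y w) = Cmul (Cmul (f i w) isqrt2) (qi k (st i) y sg)).

Lemma isqrt2_sq : Cmul (Cconj isqrt2) isqrt2 = RtoC (/2).
Proof. unfold isqrt2, RtoC. apply Ceq; simpl. 
  rewrite <- Rinv_mult. rewrite sqrt_sqrt by lra. ring. ring. Qed.

Lemma qsum k s s' sg sg' : (s < k)%nat -> (s' < k)%nat ->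
  csum (k+1) (fun y => Cmul (Cconj (qi k s y sg)) (qi k s' y sg')) =
  Cadd C1 (Cmul (Cconj sg) (Cmul sg' (if Nat.eqb s s' then C1 else C0))).
Proof.
  intros. rewrite Nat.add_1_r. simpl.
  unfold qi at 3 4. rewrite Nat.eqb_refl.
  replace (Nat.eqb s k) with false by (symmetry; apply Nat.eqb_neq; lia).
  replace (Nat.eqb s' k) with false by (symmetry; apply Nat.eqb_neq; lia).
  transitivity (Cadd (csum k (fun y => Cmul (Cmul (Cconj sg) (Cmul sg' (if Nat.eqb s' y then C1 else C0))) (if Nat.eqb s (0 + y) then C1 else C0))) C1).
  - f_equal. apply csum_ext; intros y Hy. unfold qi.
    replace (Nat.eqb k y) with false by (symmetry; apply Nat.eqb_neq; lia). simpl.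
    destruct (Nat.eqb s y); destruct (Nat.eqb s' y); cring. cring.
  - rewrite csum_collapse. replace (Nat.leb 0 s) with true by (symmetry; apply Nat.leb_le; lia).
    replace (Nat.ltb s (0 + k)) with true by (symmetry; apply Nat.ltb_lt; lia). simpl.
    rewrite Nat.sub_0_r, Nat.eqb_sym. cring.
Qed.

Lemma inner_blocks d n k m u v p0 r p1 s f sg st p0' r' p1' s' f' sg' st' :
  (forall i, (i < n)%nat -> (st i < k)%nat) -> (forall i, (i < n)%nat -> (st' i < k)%nat) ->
  has_blocks d n k m u p0 r p1 s f sg st -> has_blocks d n k m v p0' r' p1' s' f' sg' st' ->
  inner (dimH d n k m) u v =
  Cadd (Cadd (Cmul (Cconj p0) (Cmul p0' (inner d r r'))) (Cmul (Cconj p1) (Cmul p1' (inner d s s'))))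
    (csum n (fun i => Cmul (inner m (f i) (f' i))
        (Cmul (RtoC (/2)) (Cadd C1 (Cmul (Cconj sg) (Cmul sg' (if Nat.eqb (st i) (st' i) then C1 else C0))))))).
Proof.
  intros Hst Hst' [U0 [U1 UQ]] [V0 [V1 VQ]].
  rewrite inner_split. f_equal. f_equal.
  - rewrite (inner_ext d _ _ (vscale p0 r) (vscale p0' r')) by (intros; unfold vscale; auto).
    rewrite inner_scale_l, inner_scale_r. auto.
  - rewrite (inner_ext d _ _ (vscale p1 s) (vscale p1' s')) by (intros; unfold vscale; auto).
    rewrite inner_scale_l, inner_scale_r. auto.
  - apply csum_ext; intros i Hi.
    transitivity (csum (k+1) (fun y => Cmul (Cmul (RtoC (/2)) (Cmul (Cconj (qi k (st i) y sg)) (qi k (st' i) y sg'))) (inner m (f i) (f' i)))).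
    + apply csum_ext; intros y Hy.
      rewrite (inner_ext m _ _ (vscale (Cmul isqrt2 (qi k (st i) y sg)) (f i)) (vscale (Cmul isqrt2 (qi k (st' i) y sg')) (f' i))).
      rewrite inner_scale_l, inner_scale_r. rewrite <- isqrt2_sq. cring.
      intros; rewrite UQ by auto; unfold vscale; cring.
      intros; rewrite VQ by auto; unfold vscale; cring.
    + rewrite csum_scal_r, csum_scal, qsum by auto. cring.
Qed.

Lemma has_blocks_ext d n k m u u' p0 r p1 s f sg st :
  (forall t, u' t = u t) -> has_blocks d n k m u p0 r p1 s f sg st -> has_blocks d n k m u' p0 r p1 s f sg st.
Proof. intros H [H0 [H1 H2]]. split; [|split]; intros; rewrite H; auto. Qed.

Definition SVec d k m n (c0 c1 : R) (r s : vec) (c2 : R) (sg : bool) (st : nat -> nat) (g : nat -> vec) : vec :=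
  vadd (vadd (vscale (RtoC c0) (embO d 0 r)) (vscale (RtoC c1) (embO d 1 s))) (vscale (RtoC c2) (Qs d k m n sg st g)).

Lemma SVec_blocks d k m n c0 c1 r s c2 sg st g : (forall i, (i < n)%nat -> (st i < k)%nat) ->
  has_blocks d n k m (SVec d k m n c0 c1 r s c2 sg st g) (RtoC c0) r (RtoC c1) s
     (fun i => vscale (RtoC c2) (g i)) (sgc sg) st.
Proof.
  intros Hst. unfold SVec, has_blocks, vadd, vscale. split; [|split]; intros.
  - rewrite embO_00, embO_10, Qs_at_O by (unfold idxO; lia). cring.
  - rewrite embO_11, embO_01, Qs_at_O by (unfold idxO; lia). cring.
  - rewrite embO_Q, embO_Q, Qs_at_Q by (auto; lia). cring.
Qed.


Lemma mapply_outer D a b v t : mapply D (outer a b) v t = Cmul (a t) (inner D b v).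
Proof. unfold mapply, outer, inner. rewrite <- csum_scal. apply csum_ext; intros; cring. Qed.

Lemma mapply_msub D A B v t : mapply D (msub A B) v t = Csub (mapply D A v t) (mapply D B v t).
Proof. unfold mapply, msub.
 transitivity (csum D (fun j => Cadd (Cmul (A t j) (v j)) (Cmul (Copp C1) (Cmul (B t j) (v j))))).
 apply csum_ext; intros; cring. rewrite csum_add, csum_scal. cring. Qed.

Lemma mapply_msum D N f v t : mapply D (msum N f) v t = csum N (fun i => mapply D (f i) v t).
Proof. induction N; simpl. unfold mapply. apply csum_zero; intros; cring.
 rewrite <- IHN. unfold mapply, madd. rewrite <- csum_add. apply csum_ext; intros; cring. Qed.

Lemma mapply_basis D L j l : (j < D)%nat -> mapply D L (basis j) l = L l j.
Proof. intros. unfold mapply, basis.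
 transitivity (csum D (fun t => Cmul (L l t) (if Nat.eqb j (0 + t) then C1 else C0))).
 apply csum_ext; intros. rewrite Nat.eqb_sym. auto.
 rewrite csum_collapse. replace (Nat.leb 0 j) with true by (symmetry; apply Nat.leb_le; lia).
 replace (Nat.ltb j (0 + D)) with true by (symmetry; apply Nat.ltb_lt; lia). simpl. rewrite Nat.sub_0_r. auto. Qed.

Lemma mmul_r_outer D A c a b i j :
  mmul D A (mscale c (outer a b)) i j = Cmul c (Cmul (mapply D A a i) (Cconj (b j))).
Proof. unfold mmul, mscale, outer, mapply. rewrite <- csum_scal_r, <- csum_scal. apply csum_ext; intros; cring. Qed.

Lemma mmul_l_outer D B c a b i j :
  mmul D (mscale c (outer a b)) B i j = Cmul c (Cmul (a i) (inner D b (fun l => B l j))).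
Proof. unfold mmul, mscale, outer, inner. rewrite <- csum_scal, <- csum_scal. apply csum_ext; intros; cring. Qed.

Lemma mmul_l_outer1 D B a b i j :
  mmul D (outer a b) B i j = Cmul (a i) (inner D b (fun l => B l j)).
Proof. unfold mmul, outer, inner. rewrite <- csum_scal. apply csum_ext; intros; cring. Qed.

Lemma mmul_madd_l D A1 A2 B i j : mmul D (madd A1 A2) B i j = Cadd (mmul D A1 B i j) (mmul D A2 B i j).
Proof. unfold mmul, madd. rewrite <- csum_add. apply csum_ext; intros; cring. Qed.

Lemma vnorm_ext D u v : (forall t, (t < D)%nat -> u t = v t) -> vnorm D u = vnorm D v.
Proof. intros. rewrite !vnorm_inner. rewrite (inner_ext D u u v v); auto. Qed.

Lemma vnorm_nonneg D v : 0 <= vnorm D v.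
Proof. rewrite vnorm_inner. apply sqrt_pos. Qed.

Lemma vnorm_scalC D a z : vnorm D (fun t => Cmul (a t) z) = sqrt (Cabs2 z) * vnorm D a.
Proof. rewrite !vnorm_inner. rewrite <- sqrt_mult by (try apply Cabs2_nonneg; apply inner_self_nonneg).
 f_equal. rewrite !inner_self_re. rewrite <- rsum_scal. apply rsum_ext; intros. unfold Cabs2; simpl; ring. Qed.

Lemma vnorm_scale D c a : vnorm D (vscale (RtoC c) a) = Rabs c * vnorm D a.
Proof. unfold vscale. rewrite (vnorm_ext D _ (fun t => Cmul (a t) (RtoC c))) by (intros; cring).
 rewrite vnorm_scalC. f_equal. unfold Cabs2, RtoC; simpl. rewrite Rmult_0_r, Rplus_0_r. apply sqrt_Rsqr_abs. Qed.

Lemma bessel D b v : inner D b b = C1 -> Cabs2 (inner D b v) <= cre (inner D v v).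
Proof.
  intros Hb. set (z := inner D b v).
  set (w := vsub v (vscale z b)).
  assert (H1 : inner D w w = Csub (inner D v v) (RtoC (Cabs2 z))).
  { unfold w. rewrite inner_sub_l, !inner_sub_r, !inner_scale_l, !inner_scale_r, Hb.
    rewrite (inner_conj D b v). fold z. unfold Cabs2, RtoC. cring. }
  pose proof (inner_self_nonneg D w). rewrite H1 in H. simpl in H. lra.
Qed.

Lemma opnorm_rank1 D a b : inner D b b = C1 -> is_opnorm D (outer a b) (vnorm D a).
Proof.
  intros Hb. split; [apply vnorm_nonneg| split].
  - intros v. rewrite (vnorm_ext D _ (fun t => Cmul (a t) (inner D b v))) by (intros; apply mapply_outer).
    rewrite vnorm_scalC. rewrite Rmult_comm. apply Rmult_le_compat_l. apply vnorm_nonneg.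
    rewrite vnorm_inner. apply sqrt_le_1. apply Cabs2_nonneg. apply inner_self_nonneg. apply bessel; auto.
  - intros c Hc Hop. specialize (Hop b).
    rewrite (vnorm_ext D _ (fun t => Cmul (a t) (inner D b b))) in Hop by (intros; apply mapply_outer).
    rewrite vnorm_scalC, Hb in Hop. rewrite (vnorm_inner D b), Hb in Hop. unfold Cabs2 in Hop; simpl in Hop.
    replace (1*1+0*0) with 1 in Hop by ring. rewrite sqrt_1 in Hop. lra.
Qed.

Lemma mapply_meq D A B v t : meq D A B -> (t < D)%nat -> mapply D A v t = mapply D B v t.
Proof. intros H Ht. unfold mapply. apply csum_ext; intros. rewrite H; auto. Qed.

Lemma is_opnorm_meq D A B r : meq D A B -> is_opnorm D A r -> is_opnorm D B r.
Proof.
  intros H [H0 [H1 H2]]. assert (E : forall v, vnorm D (mapply D A v) = vnorm D (mapply D B v)).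
  { intros; apply vnorm_ext; intros; apply mapply_meq; auto. }
  split; [auto| split].
  - intros v. rewrite <- E. auto.
  - intros c Hc Hop. apply H2; auto. intros v. rewrite E. auto.
Qed.

Lemma csum_RtoC n f : csum n (fun i => RtoC (f i)) = RtoC (rsum n f).
Proof. induction n; simpl. auto. rewrite IHn. cring. Qed.

Lemma mmul_mscale_l D c A B i j : mmul D (mscale c A) B i j = Cmul c (mmul D A B i j).
Proof. unfold mmul, mscale. rewrite <- csum_scal. apply csum_ext; intros; cring. Qed.


Lemma hc_ext f g s l : (forall t, f t = g t) -> has_cderiv f s l -> has_cderiv g s l.
Proof. intros H. replace g with f by (apply functional_extensionality; auto). auto. Qed.
Lemma hc_eq f s l l' : l = l' -> has_cderiv f s l -> has_cderiv f s l'.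
Proof. intros ->; auto. Qed.

Lemma hc_const z s : has_cderiv (fun _ => z) s C0.
Proof. split; simpl; apply (derivable_pt_lim_const _ s). Qed.

Lemma hc_add f g s a b : has_cderiv f s a -> has_cderiv g s b -> has_cderiv (fun t => Cadd (f t) (g t)) s (Cadd a b).
Proof. intros [H1 H2] [H3 H4]. split; simpl.
 apply (derivable_pt_lim_plus (fun t => cre (f t)) (fun t => cre (g t))); auto.
 apply (derivable_pt_lim_plus (fun t => cim (f t)) (fun t => cim (g t))); auto. Qed.

Lemma dpl_eq f x l l' : l = l' -> derivable_pt_lim f x l -> derivable_pt_lim f x l'.
Proof. intros ->; auto. Qed.

Lemma hc_mul f g s a b : has_cderiv f s a -> has_cderiv g s b ->
  has_cderiv (fun t => Cmul (f t) (g t)) s (Cadd (Cmul a (g s)) (Cmul (f s) b)).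
Proof. intros [H1 H2] [H3 H4]. split; simpl.
 - eapply dpl_eq; [|apply (derivable_pt_lim_minus (fun t => cre (f t) * cre (g t)) (fun t => cim (f t) * cim (g t)));
     [apply (derivable_pt_lim_mult (fun t => cre (f t)) (fun t => cre (g t))); eauto
     |apply (derivable_pt_lim_mult (fun t => cim (f t)) (fun t => cim (g t))); eauto]]. ring.
 - eapply dpl_eq; [|apply (derivable_pt_lim_plus (fun t => cre (f t) * cim (g t)) (fun t => cim (f t) * cre (g t)));
     [apply (derivable_pt_lim_mult (fun t => cre (f t)) (fun t => cim (g t))); eauto
     |apply (derivable_pt_lim_mult (fun t => cim (f t)) (fun t => cre (g t))); eauto]]. ring.
Qed.

Lemma hc_conj f s a : has_cderiv f s a -> has_cderiv (fun t => Cconj (f t)) s (Cconj a).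
Proof. intros [H1 H2]. split; simpl; auto. apply (derivable_pt_lim_opp (fun t => cim (f t))); auto. Qed.

Lemma hc_scalC z f s a : has_cderiv f s a -> has_cderiv (fun t => Cmul z (f t)) s (Cmul z a).
Proof. intros H. eapply hc_eq; [|apply hc_mul; [apply hc_const|exact H]]. cring. Qed.

Lemma hc_realfun (h : R -> R) h' z s : derivable_pt_lim h s h' ->
  has_cderiv (fun t => Cmul (RtoC (h t)) z) s (Cmul (RtoC h') z).
Proof. intros H. assert (H2 : has_cderiv (fun t => RtoC (h t)) s (RtoC h')).
 { split; simpl. exact H. apply (derivable_pt_lim_const 0 s). }
 eapply hc_eq; [|apply hc_mul; [apply H2|apply hc_const]]. cring. Qed.

Lemma dth_cos s : derivable_pt_lim (fun t => cos (theta t)) s (- sin (theta s) * (PI/2)).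
Proof. apply is_derive_Reals. unfold theta. auto_derive; auto. ring. Qed.
Lemma dth_sin s : derivable_pt_lim (fun t => sin (theta t)) s (cos (theta s) * (PI/2)).
Proof. apply is_derive_Reals. unfold theta. auto_derive; auto. ring. Qed.
Lemma dth_msin s : derivable_pt_lim (fun t => - sin (theta t)) s (- cos (theta s) * (PI/2)).
Proof. apply is_derive_Reals. unfold theta. auto_derive; auto. ring. Qed.
Definition xid (s : R) : R := PI * (cos (theta s) ^ 2 - sin (theta s) ^ 2).
Lemma dxi c s : derivable_pt_lim (fun t => xi t * c) s (xid s * c).
Proof. apply is_derive_Reals. unfold xi, xid, theta. auto_derive; auto. simpl. field. Qed.
Lemma dxi2 c e s : derivable_pt_lim (fun t => xi t * c / e) s (xid s * c / e).
Proof. apply is_derive_Reals. unfold xi, xid, theta. auto_derive; auto. simpl. unfold Rdiv. generalize (/ e); intro ie. field. Qed.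


Lemma inner_vscaleR D b c u v : inner D (vscale (RtoC b) u) (vscale (RtoC c) v) = Cmul (RtoC (b*c)) (inner D u v).
Proof. rewrite inner_scale_l, inner_scale_r. cring. Qed.

Lemma unit_inner d v : vnorm d v = 1 -> inner d v v = C1.
Proof. intros H. rewrite inner_self_RtoC, H. cring. Qed.

Lemma inner_basis m w g : (w < m)%nat -> inner m (basis w) g = g w.
Proof. intros. unfold inner, basis.
 transitivity (csum m (fun t => Cmul (g t) (if Nat.eqb w (0 + t) then C1 else C0))).
 apply csum_ext; intros t _. simpl. rewrite (Nat.eqb_sym w t). destruct (Nat.eqb t w); cring.
 rewrite csum_collapse. replace (Nat.leb 0 w) with true by (symmetry; apply Nat.leb_le; lia).
 replace (Nat.ltb w (0 + m)) with true by (symmetry; apply Nat.ltb_lt; lia). simpl. rewrite Nat.sub_0_r. auto. Qed.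

Lemma inner_vzero m g : inner m vzero g = C0.
Proof. unfold inner, vzero. apply csum_zero; intros; cring. Qed.



Lemma PsiPlus_blocks d n k m W eps strs rv sv U a s : (forall i, (i < n)%nat -> (strs a i < k)%nat) ->
  has_blocks d n k m (PsiPlus d n k m W eps strs rv sv U a s) (RtoC (cos (theta s))) (rv a) (RtoC (sin (theta s))) (sv a)
    (fun i => vscale (RtoC (eps / sqrt W)) (U a i)) (sgc true) (strs a).
Proof. intros H. exact (SVec_blocks d k m n _ _ _ _ _ true (strs a) (U a) H). Qed.

Lemma PsiMinus_blocks d n k m W eps strs rv sv V a s : (forall i, (i < n)%nat -> (strs a i < k)%nat) ->
  has_blocks d n k m (PsiMinus d n k m W eps strs rv sv V a s) (RtoC (- sin (theta s))) (rv a) (RtoC (cos (theta s))) (sv a)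
    (fun i => vscale (RtoC (xi s * sqrt W / eps)) (V a i)) (sgc false) (strs a).
Proof. intros H. exact (SVec_blocks d k m n _ _ _ _ _ false (strs a) (V a) H). Qed.

Definition eQ d k m (strs : nat -> nat -> nat) x i w : vec := ketQminus d k m i (strs x i) (basis w).

Lemma eQ_blocks d n k m strs x i w rv : (forall i, (i < n)%nat -> (strs x i < k)%nat) -> (i < n)%nat ->
  has_blocks d n k m (eQ d k m strs x i w) C0 rv C0 rv (fun i' => if Nat.eqb i i' then basis w else vzero) mone (strs x).
Proof.
  intros H Hi. unfold eQ, ketQminus. split; [|split]; intros.
  - pose proof (ketQ_at_O d k m i (strs x i) (basis w) (idxO d 0 a) false) as HH. simpl in HH. rewrite HH by (unfold idxO; lia). cring.
  - pose proof (ketQ_at_O d k m i (strs x i) (basis w) (idxO d 1 a) false) as HH. simpl in HH. rewrite HH by (unfold idxO; lia). cring.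
  - pose proof (ketQ_at_Q d k m i (strs x i) (basis w) i0 y w0 false) as HH. simpl in HH. rewrite HH by (auto; apply H; auto).
    destruct (Nat.eqb i i0) eqn:E. apply Nat.eqb_eq in E; subst. unfold sgc. auto. unfold vzero. cring.
Qed.


Lemma sc2 s : sin (theta s) ^ 2 + cos (theta s) ^ 2 = 1.
Proof. pose proof (sin2_cos2 (theta s)). unfold Rsqr in H. lra. Qed.

Lemma norm_SVec d n k m c0 c1 r s c2 sg st g :
  (forall i, (i < n)%nat -> (st i < k)%nat) -> vnorm d r = 1 -> vnorm d s = 1 ->
  inner (dimH d n k m) (SVec d k m n c0 c1 r s c2 sg st g) (SVec d k m n c0 c1 r s c2 sg st g) =
  RtoC (c0^2 + c1^2 + c2^2 * rsum n (fun i => vnorm m (g i) ^ 2)).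
Proof.
  intros Hst Hr Hs. rewrite (inner_blocks _ _ _ _ _ _ _ _ _ _ _ _ _ _ _ _ _ _ _ _ Hst Hst (SVec_blocks _ _ _ _ _ _ _ _ _ _ _ _ Hst) (SVec_blocks _ _ _ _ _ _ _ _ _ _ _ _ Hst)).
  rewrite !unit_inner by auto.
  rewrite (csum_ext _ _ (fun i => RtoC (c2^2 * vnorm m (g i) ^2))).
  rewrite csum_RtoC, rsum_scal. cring.
  intros i Hi. rewrite inner_vscaleR, Nat.eqb_refl, inner_self_RtoC. unfold sgc; destruct sg; unfold mone; cfield.
Qed.

Lemma orth_PP_PM d n k m W eps strs rv sv U V x b s :
  (forall i, (i < n)%nat -> (strs x i < k)%nat) -> (forall i, (i < n)%nat -> (strs b i < k)%nat) ->
  0 < W -> 0 < eps ->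
  Csub (gram d rv x b) (gram d sv x b) = csum n (fun i => Cmul (DeltaM strs i x b) (inner m (U x i) (V b i))) ->
  inner (dimH d n k m) (PsiPlus d n k m W eps strs rv sv U x s) (PsiMinus d n k m W eps strs rv sv V b s) = C0.
Proof.
  intros Hx Hb HW He Hdec.
  rewrite (inner_blocks _ _ _ _ _ _ _ _ _ _ _ _ _ _ _ _ _ _ _ _ Hx Hb (PsiPlus_blocks d n k m W eps strs rv sv U x s Hx) (PsiMinus_blocks d n k m W eps strs rv sv V b s Hb)).
  rewrite (csum_ext _ _ (fun i => Cmul (RtoC (xi s / 2)) (Cmul (DeltaM strs i x b) (inner m (U x i) (V b i))))).
  rewrite csum_scal, <- Hdec. unfold gram, xi. cfield.
  intros i Hi. rewrite inner_vscaleR.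
  replace (eps / sqrt W * (xi s * sqrt W / eps)) with (xi s).
  unfold DeltaM, sgc, mone. destruct (Nat.eqb (strs x i) (strs b i)); cfield.
  assert (0 < sqrt W) by (apply sqrt_lt_R0; auto). field. split; lra.
Qed.

Lemma orth_PP_eQ d n k m W eps strs rv sv U x s i w :
  (forall i, (i < n)%nat -> (strs x i < k)%nat) -> (i < n)%nat ->
  inner (dimH d n k m) (PsiPlus d n k m W eps strs rv sv U x s) (eQ d k m strs x i w) = C0.
Proof.
  intros Hx Hi.
  rewrite (inner_blocks _ _ _ _ _ _ _ _ _ _ _ _ _ _ _ _ _ _ _ _ Hx Hx (PsiPlus_blocks d n k m W eps strs rv sv U x s Hx) (eQ_blocks d n k m strs x i w (rv x) Hx Hi)).
  rewrite csum_zero. cring.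
  intros j Hj. rewrite Nat.eqb_refl. unfold sgc, mone. cring.
Qed.

Lemma eQ_PM d n k m W eps strs rv sv V x s i w :
  (forall i, (i < n)%nat -> (strs x i < k)%nat) -> (i < n)%nat -> (w < m)%nat -> 0 < eps ->
  inner (dimH d n k m) (eQ d k m strs x i w) (PsiMinus d n k m W eps strs rv sv V x s) = Cmul (RtoC (xi s * sqrt W / eps)) (V x i w).
Proof.
  intros Hx Hi Hw He.
  rewrite (inner_blocks _ _ _ _ _ _ _ _ _ _ _ _ _ _ _ _ _ _ _ _ Hx Hx (eQ_blocks d n k m strs x i w (rv x) Hx Hi) (PsiMinus_blocks d n k m W eps strs rv sv V x s Hx)).
  rewrite (csum_ext _ _ (fun j => if Nat.eqb j i then Cmul (RtoC (xi s * sqrt W / eps)) (V x i w) else C0)).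
  rewrite csum_if by auto. cring.
  intros j Hj. rewrite Nat.eqb_refl. rewrite (Nat.eqb_sym j i). destruct (Nat.eqb i j) eqn:E.
  - apply Nat.eqb_eq in E; subst. rewrite inner_scale_r, inner_basis by auto. unfold sgc, mone. cfield; lra.
  - rewrite inner_vzero. cring.
Qed.


Lemma inner_csum_r1 D u N (F : nat -> vec) :
  inner D u (fun t => csum N (fun b => F b t)) = csum N (fun b => inner D u (F b)).
Proof.
  rewrite (inner_ext D u _ u (fun t => csum N (fun b => Cmul C1 (F b t)))).
  rewrite inner_csum_r. apply csum_ext; intros; cring.
  auto. intros; apply csum_ext; intros; cring.
Qed.

Lemma inner_mulz D u e z : inner D u (fun t => Cmul (e t) z) = Cmul z (inner D u e).
Proof. rewrite (inner_ext D u _ u (vscale z e)). apply inner_scale_r. auto. intros; unfold vscale; cring. Qed.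

Lemma PiX_apply d n k m strs x v t :
  mapply (dimH d n k m) (PiX d n k m strs x) v t =
  csum n (fun i => csum m (fun w => Cmul (eQ d k m strs x i w t) (inner (dimH d n k m) (eQ d k m strs x i w) v))).
Proof.
  unfold PiX. rewrite mapply_msum. apply csum_ext; intros i _.
  rewrite mapply_msum. apply csum_ext; intros w _. cbv zeta. apply mapply_outer.
Qed.

Lemma eQ_eval d k m strs x i w t : (w < m)%nat ->
  eQ d k m strs x i w t = Cmul isqrt2 (Csub (basis (idxQ d k m i k w) t) (basis (idxQ d k m i (strs x i) w) t)).
Proof.
  intros Hw. unfold eQ, ketQminus. rewrite vsum_eval.
  transitivity (csum m (fun w' => Cmul (Cmul isqrt2 (Csub (basis (idxQ d k m i k w') t) (basis (idxQ d k m i (strs x i) w') t)))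
                                      (if Nat.eqb w (0 + w') then C1 else C0))).
  - apply csum_ext; intros w' _. unfold vscale, vsub, basis at 1. simpl. rewrite (Nat.eqb_sym w w').
    destruct (Nat.eqb w' w); cring.
  - rewrite csum_collapse. replace (Nat.leb 0 w) with true by (symmetry; apply Nat.leb_le; lia).
    replace (Nat.ltb w (0 + m)) with true by (symmetry; apply Nat.ltb_lt; lia). simpl. rewrite Nat.sub_0_r. auto.
Qed.

Lemma PiX_PsiMinus d n k m W eps strs rv sv V x s t :
  (forall i, (i < n)%nat -> (strs x i < k)%nat) -> 0 < eps ->
  mapply (dimH d n k m) (PiX d n k m strs x) (PsiMinus d n k m W eps strs rv sv V x s) t =
  Cmul (RtoC (xi s * sqrt W / eps)) (Qs d k m n false (strs x) (V x) t).
Proof.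
  intros Hx He. rewrite PiX_apply. unfold Qs. rewrite vsum_eval. rewrite <- csum_scal.
  apply csum_ext; intros i Hi. unfold ketQminus. rewrite vsum_eval. rewrite <- csum_scal.
  apply csum_ext; intros w Hw. rewrite eQ_PM by auto. rewrite eQ_eval by auto.
  unfold vscale, vsub. cring.
Qed.


Lemma span_proj_fix D NX vs L a : (a < NX)%nat -> is_span_proj D NX vs L ->
  forall t, (t < D)%nat -> mapply D L (vs a) t = vs a t.
Proof.
  intros Ha HL. destruct (HL (vs a)) as [[c Hc] Ho].
  set (r := vsub (vs a) (mapply D L (vs a))).
  assert (E : inner D r r = C0).
  { unfold r at 1. rewrite inner_sub_l. rewrite Ho by auto.
    rewrite (inner_ext D _ r (fun t => csum NX (fun b => Cmul (c b) (vs b t))) r) by auto.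
    rewrite inner_csum_l. rewrite csum_zero. cring. intros b Hb. rewrite Ho by auto. cring. }
  intros t Ht. assert (cre (inner D r r) = 0) by (rewrite E; auto).
  pose proof (self_zero D r H t Ht). unfold r, vsub in H0.
  apply Ceq; apply (f_equal cre) in H0 || idtac.
  - simpl in H0. lra.
  - assert (Hi : cim (Csub (vs a t) (mapply D L (vs a) t)) = 0).
    { unfold r, vsub in *. pose proof (self_zero D r H t Ht). unfold r, vsub in H1. rewrite H1. auto. }
    simpl in Hi. lra.
Qed.

Definition dPP d n k m (strs : nat -> nat -> nat) (rv sv : nat -> vec) (U : nat -> nat -> vec) x s : vec :=
  SVec d k m n (- sin (theta s) * (PI/2)) (cos (theta s) * (PI/2)) (rv x) (sv x) 0 true (strs x) (U x).
Definition dPM d n k m W eps (strs : nat -> nat -> nat) (rv sv : nat -> vec) (V : nat -> nat -> vec) x s : vec :=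
  SVec d k m n (- cos (theta s) * (PI/2)) (- sin (theta s) * (PI/2)) (rv x) (sv x) (xid s * sqrt W / eps) false (strs x) (V x).

Lemma d_PP d n k m W eps strs rv sv U x s t :
  has_cderiv (fun s' => PsiPlus d n k m W eps strs rv sv U x s' t) s (dPP d n k m strs rv sv U x s t).
Proof.
  unfold PsiPlus, kplus, dPP, SVec, vadd, vscale.
  apply hc_add; [apply hc_add|].
  - apply (hc_realfun (fun t => cos (theta t))). apply dth_cos.
  - apply (hc_realfun (fun t => sin (theta t))). apply dth_sin.
  - apply (hc_realfun (fun _ => eps / sqrt W)). apply (derivable_pt_lim_const _ s).
Qed.

Lemma d_PM d n k m W eps strs rv sv V x s t :
  has_cderiv (fun s' => PsiMinus d n k m W eps strs rv sv V x s' t) s (dPM d n k m W eps strs rv sv V x s t).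
Proof.
  unfold PsiMinus, kminus, dPM, SVec, vadd, vscale.
  apply hc_add; [apply hc_add|].
  - apply (hc_realfun (fun t => - sin (theta t))). apply dth_msin.
  - apply (hc_realfun (fun t => cos (theta t))). apply dth_cos.
  - apply (hc_realfun (fun t => xi t * sqrt W / eps)). apply dxi2.
Qed.

Lemma orth_dPP d n k m W eps strs rv sv U x s : (forall i, (i < n)%nat -> (strs x i < k)%nat) ->
  vnorm d (rv x) = 1 -> vnorm d (sv x) = 1 ->
  inner (dimH d n k m) (dPP d n k m strs rv sv U x s) (PsiPlus d n k m W eps strs rv sv U x s) = C0.
Proof.
  intros Hx Hr Hs. unfold dPP. change (PsiPlus d n k m W eps strs rv sv U x s) with
      (SVec d k m n (cos (theta s)) (sin (theta s)) (rv x) (sv x) (eps / sqrt W) true (strs x) (U x)).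
  rewrite (inner_blocks _ _ _ _ _ _ _ _ _ _ _ _ _ _ _ _ _ _ _ _ Hx Hx (SVec_blocks _ _ _ _ _ _ _ _ _ _ _ _ Hx) (SVec_blocks _ _ _ _ _ _ _ _ _ _ _ _ Hx)).
  rewrite !unit_inner by auto. rewrite csum_zero. cring.
  intros i Hi. rewrite inner_vscaleR. cring.
Qed.

Lemma INR_fact_val n z : Z.of_nat (Factorial.fact n) = z -> INR (Factorial.fact n) = IZR z.
Proof. intros <-. apply INR_IZR_INZ. Qed.
Lemma PI_ub : PI <= 63/20.
Proof.
  destruct (Rle_lt_dec PI (63/20)) as [H|H]; auto. exfalso.
  pose proof (cos_bound (63/40) 1) as Hc.
  assert (cos (63/40) > 0). { apply cos_gt_0; lra. }
  assert (cos (63/40) <= cos_approx (63/40) (2 * (1 + 1))) by (apply Hc; lra).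
  unfold cos_approx, cos_term in H1. cbn [sum_f_R0 Nat.mul Nat.add] in H1.
  rewrite (INR_fact_val 0 1), (INR_fact_val 2 2), (INR_fact_val 4 24), (INR_fact_val 6 720), (INR_fact_val 8 40320) in H1 by (vm_compute; reflexivity).
  simpl pow in H1. lra.
Qed.


Lemma le_of_sq a b : 0 <= a -> 0 <= b -> a ^ 2 <= b ^ 2 -> a <= b.
Proof. intros. destruct (Rle_lt_dec a b); auto. nra. Qed.

Lemma cre_RtoC r : cre (RtoC r) = r.
Proof. reflexivity. Qed.

Theorem mainTheorem10
  (k n NX d m : nat) (strs : nat -> nat -> nat)
  (rv sv : nat -> vec) (U V : nat -> nat -> vec) (W eps : R) (x : nat)
  (Hn : (1 <= n)%nat)
  (Hstrs : forall a j, (a < NX)%nat -> (j < n)%nat -> (strs a j < k)%nat)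
  (Hdistinct : forall a b, (a < NX)%nat -> (b < NX)%nat -> a <> b ->
                 exists j, (j < n)%nat /\ strs a j <> strs b j)
  (Hrv : forall a, (a < NX)%nat -> vnorm d (rv a) = 1)
  (Hsv : forall a, (a < NX)%nat -> vnorm d (sv a) = 1)
  (HW : is_adv_star NX n strs (gram d rv) (gram d sv) W)
  (HWpos : 0 < W)
  (Hdec : forall a b, (a < NX)%nat -> (b < NX)%nat ->
     Csub (gram d rv a b) (gram d sv a b) =
     csum n (fun i => Cmul (DeltaM strs i a b) (inner m (U a i) (V b i))))
  (HU : forall a, (a < NX)%nat -> rsum n (fun i => vnorm m (U a i) ^ 2) <= W)
  (HV : forall a, (a < NX)%nat -> rsum n (fun i => vnorm m (V a i) ^ 2) <= W)
  (Heps : 0 < eps <= 1)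
  (Hx : (x < NX)%nat) :
  let D := dimH d n k m in
  let P := Pproj d n k m W eps strs rv sv U x in
  let X := Xop d n k m W eps strs rv sv U V x in
  (forall s, 0 <= s <= 1 -> forall L : mat,
     is_span_proj D NX (fun b => PsiMinus d n k m W eps strs rv sv V b s) L ->
     let H := msub L (PiX d n k m strs x) in
     meq D (commutator D H (X s)) (mmul D H (X s)) /\
     exists P', has_mderiv D P s P' /\ meq D (mmul D H (X s)) (mmul D P' (P s))) /\
  (eps / 2 <= W ->
   forall s, 0 <= s <= 1 ->
     exists X' r1 r2,
       has_mderiv D X s X' /\
       is_opnorm D (X s) r1 /\ is_opnorm D (mmul D X' (P s)) r2 /\
       r1 <= PI * sqrt 5 / 2 * (W / eps) /\
       r2 <= PI ^ 2 / sqrt 2 * (W / eps) /\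
       2 * r1 + r2 <= 15 * (W / eps)).
Proof.
  intros D P X.
  assert (Hxs : forall i, (i < n)%nat -> (strs x i < k)%nat) by (intros; apply Hstrs; auto).
  assert (Hsw : 0 < sqrt W) by (apply sqrt_lt_R0; auto).
  set (SU := rsum n (fun i => vnorm m (U x i) ^ 2)).
  set (SV := rsum n (fun i => vnorm m (V x i) ^ 2)).
  assert (SU0 : 0 <= SU) by (apply rsum_nonneg; intros; apply pow2_ge_0).
  assert (SV0 : 0 <= SV) by (apply rsum_nonneg; intros; apply pow2_ge_0).
  set (N0 := sqrt (1 + (eps / sqrt W) ^ 2 * SU)).
  assert (HPP : forall s, inner D (PsiPlus d n k m W eps strs rv sv U x s) (PsiPlus d n k m W eps strs rv sv U x s)
                 = RtoC (N0 ^ 2)).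
  { intros s. unfold D. change (PsiPlus d n k m W eps strs rv sv U x s) with
      (SVec d k m n (cos (theta s)) (sin (theta s)) (rv x) (sv x) (eps / sqrt W) true (strs x) (U x)).
    rewrite norm_SVec by auto. unfold N0. rewrite pow2_sqrt. pose proof (sc2 s). fold SU. apply Ceq; simpl; [simpl in H; lra| auto].
    pose proof (pow2_ge_0 (eps / sqrt W)). nra. }
  assert (N0ge1 : 1 <= N0).
  { unfold N0. apply Rle_trans with (sqrt 1); [rewrite sqrt_1; lra|]. apply sqrt_le_1_alt. pose proof (pow2_ge_0 (eps / sqrt W)). nra. }
  assert (NrmE : forall s, Nrm d n k m W eps strs rv sv U x s = N0).
  { intros s. unfold Nrm. rewrite vnorm_inner. fold D. rewrite HPP. simpl. rewrite Rmult_1_r. apply sqrt_square. lra. }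
  assert (psiE : forall s, psiPlus d n k m W eps strs rv sv U x s = vscale (RtoC (/ N0)) (PsiPlus d n k m W eps strs rv sv U x s)).
  { intros s. unfold psiPlus. rewrite NrmE. auto. }
  assert (Hpsi1 : forall s, inner D (psiPlus d n k m W eps strs rv sv U x s) (psiPlus d n k m W eps strs rv sv U x s) = C1).
  { intros s. rewrite psiE, inner_vscaleR, HPP. apply Ceq; simpl; field; lra. }
  assert (Hdpsi : forall s, inner D (vscale (RtoC (/ N0)) (dPP d n k m strs rv sv U x s)) (psiPlus d n k m W eps strs rv sv U x s) = C0).
  { intros s. rewrite psiE, inner_vscaleR. unfold D. rewrite orth_dPP by auto. cring. }
  split.
  { intros s Hs L HL H.
    assert (HPsi : forall t, (t < D)%nat -> mapply D H (PsiMinus d n k m W eps strs rv sv V x s) t = kminus d rv sv x s t).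
    { intros t Ht. unfold H. rewrite mapply_msub.
      pose proof (span_proj_fix D NX _ L x Hx HL t Ht) as E. cbv beta in E. rewrite E.
      unfold D. rewrite PiX_PsiMinus by (auto; lra).
      unfold PsiMinus, Qs, vadd, vscale. cring. }
    assert (XH0 : forall i j, (i < D)%nat -> (j < D)%nat -> mmul D (X s) H i j = C0).
    { intros i j Hi Hj. unfold X, Xop. rewrite mmul_l_outer.
      assert (E : inner D (psiPlus d n k m W eps strs rv sv U x s) (fun l => H l j) = C0).
      { rewrite (inner_ext D _ (fun l => H l j) (psiPlus d n k m W eps strs rv sv U x s)
           (vsub (mapply D L (basis j)) (mapply D (PiX d n k m strs x) (basis j))));
          [| auto | intros t Ht; unfold vsub, H, msub; rewrite !mapply_basis by auto; auto].
        rewrite inner_sub_r.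
        destruct (HL (basis j)) as [[c Hc] _].
        rewrite (inner_ext D _ (mapply D L (basis j)) (psiPlus d n k m W eps strs rv sv U x s)
           (fun t => csum NX (fun b => Cmul (c b) (PsiMinus d n k m W eps strs rv sv V b s t)))) by auto.
        rewrite inner_csum_r, csum_zero.
        2: { intros b Hb. rewrite psiE, inner_scale_l. unfold D. rewrite orth_PP_PM; auto; try lra; try (intros; apply Hstrs; auto; fail). cring. }
        rewrite (inner_ext D _ (mapply D (PiX d n k m strs x) (basis j)) (psiPlus d n k m W eps strs rv sv U x s)
           (fun t => csum n (fun i => csum m (fun w => Cmul (eQ d k m strs x i w t) (inner D (eQ d k m strs x i w) (basis j)))))) by (auto; intros; apply PiX_apply).
        rewrite inner_csum_r1. rewrite csum_zero. cring.
        intros i0 Hi0. rewrite inner_csum_r1. apply csum_zero; intros w Hw. rewrite inner_mulz.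
        rewrite psiE, inner_scale_l. unfold D. rewrite orth_PP_eQ by auto. cring. }
      rewrite E. cring. }
    split.
    - intros i j Hi Hj. unfold commutator, msub at 1. rewrite XH0 by auto. cring.
    - exists (madd (outer (vscale (RtoC (/ N0)) (dPP d n k m strs rv sv U x s)) (psiPlus d n k m W eps strs rv sv U x s))
                   (outer (psiPlus d n k m W eps strs rv sv U x s) (vscale (RtoC (/ N0)) (dPP d n k m strs rv sv U x s)))).
      split.
      + intros i j Hi Hj. unfold P, Pproj.
        apply (hc_ext (fun t => Cmul (Cmul (RtoC (/N0)) (PsiPlus d n k m W eps strs rv sv U x t i))
                                     (Cconj (Cmul (RtoC (/N0)) (PsiPlus d n k m W eps strs rv sv U x t j))))).
        { intros t. unfold outer. rewrite psiE. reflexivity. }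
        eapply hc_eq; [| apply hc_mul; [apply hc_scalC, d_PP | apply hc_conj, hc_scalC, d_PP]].
        unfold madd, outer. rewrite psiE. unfold vscale. reflexivity.
      + intros i j Hi Hj. unfold X, Xop. rewrite mmul_r_outer, HPsi, NrmE by auto.
        rewrite mmul_madd_l, !mmul_l_outer1. unfold P, Pproj.
        change (fun l => outer (psiPlus d n k m W eps strs rv sv U x s) (psiPlus d n k m W eps strs rv sv U x s) l j)
          with (fun l => Cmul (psiPlus d n k m W eps strs rv sv U x s l) (Cconj (psiPlus d n k m W eps strs rv sv U x s j))).
        rewrite !inner_mulz. rewrite Hdpsi, Hpsi1.
        unfold vscale, dPP, SVec, kminus, vadd, vscale. cfield. all: repeat split; try rewrite NrmE; lra. }
  intros Hhalf s Hs.
  set (c := PI / (2 * N0)).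
  assert (PIpos : 0 < PI) by apply PI_RGT_0.
  assert (Hc0 : 0 < c) by (unfold c; apply Rdiv_lt_0_compat; lra).
  assert (Hc1 : c <= PI / 2) by (unfold c; apply Rmult_le_compat_l; [lra| apply Rinv_le_contravar; lra]).
  exists (mscale (RtoC c) (madd (outer (dPM d n k m W eps strs rv sv V x s) (psiPlus d n k m W eps strs rv sv U x s))
                                (outer (PsiMinus d n k m W eps strs rv sv V x s) (vscale (RtoC (/ N0)) (dPP d n k m strs rv sv U x s))))),
         (c * vnorm D (PsiMinus d n k m W eps strs rv sv V x s)), (c * vnorm D (dPM d n k m W eps strs rv sv V x s)).
  assert (HPM : inner D (PsiMinus d n k m W eps strs rv sv V x s) (PsiMinus d n k m W eps strs rv sv V x s)
      = RtoC ((- sin (theta s))^2 + cos (theta s) ^2 + (xi s * sqrt W / eps)^2 * SV)).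
  { unfold D. change (PsiMinus d n k m W eps strs rv sv V x s) with
      (SVec d k m n (- sin (theta s)) (cos (theta s)) (rv x) (sv x) (xi s * sqrt W / eps) false (strs x) (V x)).
    rewrite norm_SVec by auto. auto. }
  assert (HdPM : inner D (dPM d n k m W eps strs rv sv V x s) (dPM d n k m W eps strs rv sv V x s)
      = RtoC ((- cos (theta s) * (PI/2))^2 + (- sin (theta s) * (PI/2)) ^2 + (xid s * sqrt W / eps)^2 * SV)).
  { unfold D, dPM. rewrite norm_SVec by auto. auto. }
  assert (Hr1 : is_opnorm D (X s) (c * vnorm D (PsiMinus d n k m W eps strs rv sv V x s))).
  { apply (is_opnorm_meq D (outer (vscale (RtoC c) (PsiMinus d n k m W eps strs rv sv V x s)) (psiPlus d n k m W eps strs rv sv U x s))).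
    - intros i j Hi Hj. unfold X, Xop, mscale, outer, vscale. rewrite NrmE. fold c. cring.
    - replace (c * vnorm D (PsiMinus d n k m W eps strs rv sv V x s)) with (vnorm D (vscale (RtoC c) (PsiMinus d n k m W eps strs rv sv V x s))).
      apply opnorm_rank1. apply Hpsi1. rewrite vnorm_scale, Rabs_pos_eq; lra. }
  assert (Hr2 : is_opnorm D (mmul D (mscale (RtoC c) (madd (outer (dPM d n k m W eps strs rv sv V x s) (psiPlus d n k m W eps strs rv sv U x s))
                                (outer (PsiMinus d n k m W eps strs rv sv V x s) (vscale (RtoC (/ N0)) (dPP d n k m strs rv sv U x s))))) (P s))
                 (c * vnorm D (dPM d n k m W eps strs rv sv V x s))).
  { apply (is_opnorm_meq D (outer (vscale (RtoC c) (dPM d n k m W eps strs rv sv V x s)) (psiPlus d n k m W eps strs rv sv U x s))).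
    - intros i j Hi Hj. rewrite mmul_mscale_l, mmul_madd_l, !mmul_l_outer1. unfold P, Pproj.
      change (fun l => outer (psiPlus d n k m W eps strs rv sv U x s) (psiPlus d n k m W eps strs rv sv U x s) l j)
          with (fun l => Cmul (psiPlus d n k m W eps strs rv sv U x s l) (Cconj (psiPlus d n k m W eps strs rv sv U x s j))).
      rewrite !inner_mulz. rewrite Hdpsi, Hpsi1. unfold outer, vscale. cring.
    - replace (c * vnorm D (dPM d n k m W eps strs rv sv V x s)) with (vnorm D (vscale (RtoC c) (dPM d n k m W eps strs rv sv V x s))).
      apply opnorm_rank1. apply Hpsi1. rewrite vnorm_scale, Rabs_pos_eq; lra. }
  set (w := W / eps).
  assert (Hw : 1/2 <= w) by (unfold w; apply (Rmult_le_reg_r eps); [lra|]; replace (W / eps * eps) with W by (field; lra); lra).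
  assert (Hsq : (sqrt W) ^ 2 = W) by (apply pow2_sqrt; lra).
  assert (HSV : SV <= W) by (apply HV; auto).
  pose proof (sc2 s) as Hsc.
  assert (Hcs : (cos (theta s) ^ 2 - sin (theta s) ^ 2) ^ 2 + (2 * cos (theta s) * sin (theta s)) ^ 2 = 1).
  { replace 1 with ((sin (theta s) ^ 2 + cos (theta s) ^ 2) ^ 2) by (rewrite Hsc; ring). ring. }
  assert (Hxi : xi s ^ 2 <= 1) by (unfold xi; pose proof (pow2_ge_0 (cos (theta s) ^ 2 - sin (theta s) ^ 2)); lra).
  assert (Hxid : xid s ^ 2 <= PI ^ 2).
  { unfold xid. rewrite Rpow_mult_distr. pose proof (pow2_ge_0 (2 * cos (theta s) * sin (theta s))). pose proof (pow2_ge_0 PI). nra. }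
  assert (HWe : W / eps ^ 2 * W = w ^ 2) by (unfold w; field; lra).
  assert (HWe0 : 0 <= W / eps ^ 2) by (apply Rle_mult_inv_pos; nra).
  assert (B1 : vnorm D (PsiMinus d n k m W eps strs rv sv V x s) <= sqrt 5 * w).
  { assert (E : vnorm D (PsiMinus d n k m W eps strs rv sv V x s) ^ 2 <= 5 * w ^ 2).
    { rewrite vnorm_sq, HPM. rewrite cre_RtoC.
      replace ((xi s * sqrt W / eps) ^ 2) with (xi s ^ 2 * (W / eps ^ 2)) by (unfold Rdiv; rewrite !Rpow_mult_distr, Hsq, pow_inv; ring).
      assert (xi s ^ 2 * (W / eps ^ 2) * SV <= 1 * (W / eps ^ 2) * W).
      { apply Rmult_le_compat; try nra; try (apply Rmult_le_pos; nra); apply Rmult_le_compat_r; nra. }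
      assert (1/4 <= w ^ 2) by nra. match goal with H : _ <= _ * (W / eps ^ 2) * W |- _ => rename H into Hb end.
      try rewrite Rmult_1_l in Hb. repeat rewrite Rmult_assoc in Hb. rewrite HWe in Hb.
      assert ((- sin (theta s)) ^ 2 + cos (theta s) ^ 2 = 1) by (rewrite <- Hsc; ring).
      nra. }
    pose proof (vnorm_nonneg D (PsiMinus d n k m W eps strs rv sv V x s)).
    assert (0 <= sqrt 5) by apply sqrt_pos. assert (sqrt 5 ^ 2 = 5) by (apply pow2_sqrt; lra).
    apply le_of_sq; auto. nra. rewrite Rpow_mult_distr. nra. }
  assert (B2 : vnorm D (dPM d n k m W eps strs rv sv V x s) <= sqrt 2 * PI * w).
  { assert (E : vnorm D (dPM d n k m W eps strs rv sv V x s) ^ 2 <= 2 * PI ^ 2 * w ^ 2).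
    { rewrite vnorm_sq, HdPM. rewrite cre_RtoC.
      replace ((xid s * sqrt W / eps) ^ 2) with (xid s ^ 2 * (W / eps ^ 2)) by (unfold Rdiv; rewrite !Rpow_mult_distr, Hsq, pow_inv; ring).
      assert (xid s ^ 2 * (W / eps ^ 2) * SV <= PI ^ 2 * (W / eps ^ 2) * W).
      { apply Rmult_le_compat; try nra; try (apply Rmult_le_pos; nra); apply Rmult_le_compat_r; nra. }
      assert (1/4 <= w ^ 2) by nra. match goal with H : _ <= _ * (W / eps ^ 2) * W |- _ => rename H into Hb end.
      try rewrite Rmult_1_l in Hb. repeat rewrite Rmult_assoc in Hb. rewrite HWe in Hb.
      assert ((- cos (theta s) * (PI / 2)) ^ 2 + (- sin (theta s) * (PI / 2)) ^ 2 = PI^2/4).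
      { transitivity ((sin (theta s) ^ 2 + cos (theta s) ^ 2) * PI^2/4). field. rewrite Hsc. field. }
      nra. }
    pose proof (vnorm_nonneg D (dPM d n k m W eps strs rv sv V x s)).
    assert (0 <= sqrt 2) by apply sqrt_pos. assert (sqrt 2 ^ 2 = 2) by (apply pow2_sqrt; lra).
    apply le_of_sq; auto. apply Rmult_le_pos; nra. rewrite !Rpow_mult_distr. nra. }
  assert (S5 : sqrt 5 <= 22361/10000).
  { assert (0 <= sqrt 5) by apply sqrt_pos. assert (sqrt 5 ^ 2 = 5) by (apply pow2_sqrt; lra). nra. }
  assert (S2 : 1414/1000 <= sqrt 2).
  { assert (0 <= sqrt 2) by apply sqrt_pos. assert (sqrt 2 ^ 2 = 2) by (apply pow2_sqrt; lra). nra. }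
  pose proof PI_ub as Hpi.
  assert (Ep2 : PI / 2 * (sqrt 2 * PI) = PI ^ 2 / sqrt 2).
  { assert (E2 : sqrt 2 * sqrt 2 = 2) by (apply sqrt_sqrt; lra).
    replace (PI ^ 2 / sqrt 2) with (PI ^ 2 * sqrt 2 / (sqrt 2 * sqrt 2)) by (field; lra).
    rewrite E2. field. }
  assert (Hv1 := vnorm_nonneg D (PsiMinus d n k m W eps strs rv sv V x s)).
  assert (Hv2 := vnorm_nonneg D (dPM d n k m W eps strs rv sv V x s)).
  assert (R1 : c * vnorm D (PsiMinus d n k m W eps strs rv sv V x s) <= PI * sqrt 5 / 2 * w).
  { apply Rle_trans with (PI / 2 * (sqrt 5 * w)). apply Rmult_le_compat; lra. nra. }
  assert (R2 : c * vnorm D (dPM d n k m W eps strs rv sv V x s) <= PI ^ 2 / sqrt 2 * w).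
  { apply Rle_trans with (PI / 2 * (sqrt 2 * PI * w)). apply Rmult_le_compat; lra.
    rewrite <- Ep2. nra. }
  assert (Q2 : PI ^ 2 / sqrt 2 <= 7018/1000).
  { apply Rmult_le_reg_r with (sqrt 2). lra. unfold Rdiv. rewrite Rmult_assoc, Rinv_l by lra. nra. }
  split; [| split; [exact Hr1 | split; [exact Hr2 | split; [exact R1 | split; [exact R2 |]]]]].
  2: { assert (PI * sqrt 5 <= 7044/1000) by nra. nra. }
  intros i j Hi Hj. unfold X, Xop.
  apply (hc_ext (fun t => Cmul (RtoC c) (Cmul (PsiMinus d n k m W eps strs rv sv V x t i)
                          (Cconj (Cmul (RtoC (/N0)) (PsiPlus d n k m W eps strs rv sv U x t j)))))).
  { intros t. unfold mscale, outer. rewrite NrmE, psiE. reflexivity. }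
  eapply hc_eq; [| apply hc_scalC, hc_mul; [apply d_PM | apply hc_conj, hc_scalC, d_PP]].
  unfold mscale, madd, outer. rewrite psiE. unfold vscale. reflexivity.
Qed.
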